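(* Let $\Lambda'$, $\Lambda\subset\Lambda'$ and $Z$ be as in the context. Then for every $\Lambda$-module $U$, the $\Lambda$-action on $U$ extends to an action of $\Lambda'$, i.e. $U$ can (non-uniquely) be given the structure of a $\Lambda'$-module restricting to the given $\Lambda$-module structure.
   Context: Let $\mathbb{F}$ be a field of characteristic $p$, sufficiently large so that all simple modules considered are absolutely simple. $\Lambda'$ is an Artinian $\mathbb F$-algebra, $\Lambda\subset\Lambda'$ a subalgebra, and $Z$ a finite subgroup of the group of units of the center of $\Lambda'$, of order prime to $p$. Put $Y:=Z/(\Lambda\cap Z)$. It is assumed that $\Lambda'$ is a crossed product $\Lambda*Y$: there is a set $\widetilde Y=\{\widetilde y:y\in Y\}$ of units of $\Lambda'$ (the image of a set-theoretic section $Y\to Z$ sending $1$ to $1$) with $|\widetilde Y|=|Y|$, such that $\Lambda'$ is free as a left and as a right $\Lambda$-module with basis $\widetilde Y$, $\widetilde{1_Y}=1$, and for $y_1,y_2\in Y$, $\widetilde{y_1}\Lambda=\Lambda\widetilde{y_1}$ and $\widetilde{y_1}\widetilde{y_2}\Lambda=\widetilde{y_1y_2}\Lambda$. Modules are left modules. *)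

(* Defs.v *)
From HB Require Import structures.
From mathcomp Require Import all_boot all_order all_algebra all_fingroup.
Set Implicit Arguments. Unset Strict Implicit. Unset Printing Implicit Defensive.
Import GRing.Theory.
Local Open Scope ring_scope.

Section Defs.
Variables (F : fieldType) (A : algType F).

Definition is_subalg (L : {pred A}) : Prop :=
  1 \in L /\
  (forall (k : F) (x y : A), x \in L -> y \in L -> k *: x + y \in L) /\
  (forall x y : A, x \in L -> y \in L -> x * y \in L).

Definition left_ideal (I : A -> Prop) : Prop :=
  I 0 /\ (forall x y, I x -> I y -> I (x + y)) /\ (forall a x, I x -> I (a * x)).

Definition artinian : Prop :=
  forall I : nat -> A -> Prop,
    (forall n, left_ideal (I n)) ->
    (forall n x, I n.+1 x -> I n x) ->
    exists N, forall n, (N <= n)%N -> forall x, I n x <-> I N x.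

(* A (left) module over the subalgebra S of A: an F-vector space V with an
   action act, whose module axioms are imposed for elements of S only (the
   values of act outside S are irrelevant). *)
Definition module_over (S : {pred A}) (V : lmodType F) (act : A -> V -> V) : Prop :=
  (forall x, x \in S -> forall (k : F) (u v : V), act x (k *: u + v) = k *: act x u + act x v) /\
  (forall x y, x \in S -> y \in S -> forall (k : F) (u : V),
      act (k *: x + y) u = k *: act x u + act y u) /\
  (forall u : V, act 1 u = u) /\
  (forall x y, x \in S -> y \in S -> forall u : V, act (x * y) u = act x (act y u)).

Definition submodule_over (S : {pred A}) (V : lmodType F) (act : A -> V -> V)
  (W : V -> Prop) : Prop :=
  W 0 /\ (forall (k : F) u v, W u -> W v -> W (k *: u + v)) /\
  (forall x u, x \in S -> W u -> W (act x u)).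

Definition simple_over (S : {pred A}) (V : lmodType F) (act : A -> V -> V) : Prop :=
  module_over S act /\ (exists v : V, v != 0) /\
  forall W : V -> Prop, submodule_over S act W ->
    (forall v, W v) \/ (forall v, W v -> v = 0).

Definition abs_simple_over (S : {pred A}) (V : lmodType F) (act : A -> V -> V) : Prop :=
  simple_over S act /\
  forall f : V -> V,
    (forall (k : F) u v, f (k *: u + v) = k *: f u + f v) ->
    (forall x u, x \in S -> f (act x u) = act x (f u)) ->
    exists c : F, forall u, f u = c *: u.

End Defs.

(* Main.v *)
Require Import Defs.
From HB Require Import structures.
From mathcomp Require Import all_boot all_order all_algebra all_fingroup.
From Stdlib Require Import Classical ClassicalEpsilon.
Set Implicit Arguments. Unset Strict Implicit. Unset Printing Implicit Defensive.
Import GRing.Theory.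
Local Open Scope ring_scope.

Definition pb (P : Prop) : bool := if excluded_middle_informative P then true else false.
Lemma pbP (P : Prop) : reflect P (pb P).
Proof. rewrite /pb; case: excluded_middle_informative => h; by constructor. Qed.

Section SubI.
Variables (F : fieldType) (A : algType F) (K : A -> Prop) (HK : left_ideal K).

Definition inK (H : left_ideal K) (x : A) := K x.
Definition Kp : {pred A} := fun x => pb (inK HK x).

Lemma Kp_closed : submod_closed Kp.
Proof.
case: HK => [K0 [KD KM]]; split; first by apply/pbP.
move=> c u v /pbP Ku /pbP Kv; apply/pbP; apply: KD => //.
have -> : c *: u = (c *: 1) * u by rewrite -scalerAl mul1r.
by apply: KM.
Qed.
HB.instance Definition _ := GRing.isSubmodClosed.Build F A Kp Kp_closed.

Record KT := MkKT { kval :> A; _ : kval \in Kp }.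
HB.instance Definition _ := [isSub for kval].
HB.instance Definition _ := [Choice of KT by <:].
HB.instance Definition _ := [SubChoice_isSubLmodule of KT by <:].

Lemma kvalP (k : KT) : K (kval k).
Proof. case: k => x Hx /=; exact/pbP. Qed.

Lemma actK_proof (a : A) (k : KT) : kval (k) \in Kp -> (a * kval k) \in Kp.
Proof. move=> _; apply/pbP; have [_ [_ KM]] := HK; apply: KM; exact: kvalP. Qed.

Definition actK (a : A) (k : KT) : KT := MkKT (actK_proof a (valP k)).

Lemma actKE a k : val (actK a k) = a * val k. Proof. by []. Qed.
Lemma kvalD (u v : KT) : val (u + v) = val u + val v. Proof. by []. Qed.
Lemma kvalZ c (u : KT) : val (c *: u) = c *: val u. Proof. by []. Qed.
Lemma kval0 : val (0 : KT) = 0. Proof. by []. Qed.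
Lemma kvalP' (k : KT) : K (val k). Proof. exact: kvalP. Qed.
End SubI.

Lemma schur_central (F : fieldType) (A : algType F)
  (absA : forall (V : lmodType F) (act : A -> V -> V),
      simple_over predT act -> abs_simple_over predT act)
  (K : A -> Prop) (HK : left_ideal K) :
  (exists k, K k /\ k <> 0) ->
  (forall J, left_ideal J -> (forall x, J x -> K x) -> (exists x, J x /\ x <> 0) ->
     forall x, K x -> J x) ->
  forall c : A, (forall a, c * a = a * c) ->
  exists s : F, forall k, K k -> c * k = s *: k.
Proof.
move=> [k0 [Kk0 nk0]] Kmin c cC.
have simp : @simple_over F A predT (@KT F A K HK : lmodType F) (@actK F A K HK).
  split; first split.
  - move=> x _ s u v; apply: val_inj.
    by rewrite !(actKE, kvalD, kvalZ) mulrDr scalerAr.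
  - split.
      move=> x y _ _ s u; apply: val_inj.
      by rewrite !(actKE, kvalD, kvalZ) mulrDl scalerAl.
    split.
      by move=> u; apply: val_inj; rewrite actKE mul1r.
    by move=> x y _ _ u; apply: val_inj; rewrite !actKE mulrA.
  split.
    have Kp0 : k0 \in Kp HK by apply/pbP.
    exists (MkKT Kp0); apply/eqP => /(congr1 val) /= h; exact: nk0.
  move=> W [W0 [WD WA]].
  pose J x := exists k : @KT F A K HK, W k /\ x = val k.
  have HJ : left_ideal J.
    split; first by exists 0; split.
    split.
      move=> x y [u [Wu ->]] [v [Wv ->]]; exists (1 *: u + v); split.
        exact: WD.
      by rewrite kvalD kvalZ scale1r.
    move=> a x [u [Wu ->]]; exists (@actK F A K HK a u); split => //.
    exact: WA.
  have JK : forall x, J x -> K x by move=> x [u [_ ->]]; exact: kvalP'.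
  case: (classic (exists x, J x /\ x <> 0)) => [hJ|hJ].
    left => v; have [u [Wu]] := Kmin J HJ JK hJ (kval v) (kvalP v).
    by move/val_inj => ->.
  right => v Wv; apply: val_inj => /=; apply: NNPP => nv; apply: hJ.
  by exists (kval v); split => //; exists v.
have [_ Hend] := absA _ _ simp.
have H1 : forall (s : F) (u v : @KT F A K HK),
    @actK F A K HK c (s *: u + v) = s *: @actK F A K HK c u + @actK F A K HK c v.
  move=> s u v; apply: val_inj; by rewrite !(actKE, kvalD, kvalZ) mulrDr scalerAr.
have H2 : forall x (u : @KT F A K HK), x \in predT ->
    @actK F A K HK c (@actK F A K HK x u) = @actK F A K HK x (@actK F A K HK c u).
  move=> x u _; apply: val_inj; by rewrite !actKE !mulrA cC.
have [s Hs] := Hend (@actK F A K HK c) H1 H2.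
exists s => k Kk; have Kpk : k \in Kp HK by apply/pbP.
by have := congr1 val (Hs (MkKT Kpk)).
Qed.

Lemma MIN (F : fieldType) (A : algType F) (artA : artinian A)
  (P : (A -> Prop) -> Prop) :
  (forall I, P I -> left_ideal I) -> (exists I, P I) ->
  exists I, P I /\ forall J, P J -> (forall x, J x -> I x) -> forall x, I x -> J x.
Proof.
move=> Pid [I0 PI0]; apply: NNPP => Hn.
have step : forall I, P I -> exists J, P J /\ (forall x, J x -> I x) /\
    exists x, I x /\ ~ J x.
  move=> I PI; apply: NNPP => Hs; apply: Hn; exists I; split => // J PJ sJ x Ix.
  apply: NNPP => nJx; apply: Hs; exists J; split => //; split => //; by exists x.
pose T := {I : A -> Prop | P I}.
have nextP : forall t : T, {J : A -> Prop | P J /\ (forall x, J x -> sval t x) /\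
    exists x, sval t x /\ ~ J x}.
  move=> t; apply: constructive_indefinite_description; exact: step (svalP t).
pose next (t : T) : T := exist _ (sval (nextP t)) (proj1 (svalP (nextP t))).
pose ch n := sval (iter n next (exist _ I0 PI0)).
have [N HN] := artA ch (fun n => Pid _ (svalP (iter n next _)))
  (fun n x => proj1 (proj2 (svalP (nextP (iter n next _)))) x).
have := proj2 (proj2 (svalP (nextP (iter N next (exist _ I0 PI0))))).
case=> x [Hx nHx]; apply: nHx.
by have [_ H2] := HN N.+1 (leqnSn N) x; apply: H2.
Qed.

Section Chars.
Variables (F : fieldType) (A : algType F) (L : {pred A}) (gT : finGroupType) (emb : gT -> A).
Hypothesis subL : is_subalg L.
Hypothesis emb1 : emb 1%g = 1.
Hypothesis embM : {morph emb : x y / (x * y)%g >-> x * y}.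
Hypothesis embC : forall z a, emb z * a = a * emb z.
Hypothesis Hn : (#|gT|%:R : F) != 0.
Hypothesis Hinj : injective emb.

Let H := [set z : gT | emb z \in L].

Lemma L1 : 1 \in L. Proof. by case: subL. Qed.
Lemma LZD k x y : x \in L -> y \in L -> k *: x + y \in L. Proof. by case: subL => _ []; auto. Qed.
Lemma LM x y : x \in L -> y \in L -> x * y \in L. Proof. by case: subL => _ []; auto. Qed.
Lemma L0 : 0 \in L.
Proof. by have := LZD (-1) L1 L1; rewrite scaleN1r addNr. Qed.
Lemma LD x y : x \in L -> y \in L -> x + y \in L.
Proof. by move=> hx hy; have := LZD 1 hx hy; rewrite scale1r. Qed.
Lemma LZ k x : x \in L -> k *: x \in L.
Proof. by move=> hx; have := LZD k hx L0; rewrite addr0. Qed.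
Lemma Lsum (I : finType) (P : pred I) (f : I -> A) :
  (forall i, P i -> f i \in L) -> \sum_(i | P i) f i \in L.
Proof. move=> h; apply: (big_ind (fun x => x \in L)) => //; [exact: L0 | exact: LD]. Qed.
Lemma Lsums (I : Type) (s : seq I) (f : I -> A) :
  (forall i, f i \in L) -> \sum_(i <- s) f i \in L.
Proof. move=> h; apply: (big_ind (fun x => x \in L)) => //; [exact: L0 | exact: LD]. Qed.

Lemma gC (x y : gT) : (x * y = y * x)%g.
Proof. by apply: Hinj; rewrite !embM embC. Qed.

Lemma Hgs : group_set H.
Proof.
apply/group_setP; split; first by rewrite inE emb1 L1.
by move=> x y; rewrite !inE embM; exact: LM.
Qed.
Definition Hg := Group Hgs.

Lemma nH0 : (#|H|%:R : F) != 0.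
Proof.
apply: contra Hn => /eqP h.
have := Lagrange (subsetT Hg); rewrite cardsT => <-.
by rewrite natrM h mul0r.
Qed.

Definition hom (psi : gT -> F) := psi 1%g = 1 /\ forall x y, psi (x * y)%g = psi x * psi y.

Definition E (psi : gT -> F) : A :=
  (#|H|%:R)^-1 *: \sum_(v in H) psi (v^-1)%g *: emb v.

Lemma E_central psi a : E psi * a = a * E psi.
Proof.
rewrite /E -scalerAl -scalerAr mulr_suml mulr_sumr; congr (_ *: _).
by apply: eq_bigr => v _; rewrite -scalerAl -scalerAr embC.
Qed.

Lemma E_L psi : E psi \in L.
Proof. apply: LZ; apply: Lsum => v; rewrite inE => hv; exact: LZ. Qed.

Lemma homV psi x : hom psi -> psi (x^-1)%g * psi x = 1.
Proof. by case=> h1 hM; rewrite -hM mulVg h1. Qed.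

Lemma E_emb psi w : hom psi -> w \in H -> emb w * E psi = psi w *: E psi.
Proof.
move=> hp wH; rewrite /E -scalerAr scalerA mulrC -scalerA; congr (_ *: _).
rewrite mulr_sumr [in RHS](reindex_inj (mulgI w)) /=.
rewrite [in RHS](eq_bigl (fun v => v \in H)); last by move=> v; rewrite (groupMl _ (wH : w \in Hg)).
rewrite scaler_sumr; apply: eq_bigr => v _.
rewrite -scalerAr embM scalerA; congr (_ *: _).
case: hp => h1 hM.
rewrite invgM hM mulrCA -hM mulgV h1 mulr1.
by [].
Qed.

Lemma E_act psi x : hom psi -> (forall v, v \in H -> emb v * x = psi v *: x) -> E psi * x = x.
Proof.
move=> hp hx; rewrite /E -scalerAl mulr_suml.
rewrite (eq_bigr (fun _ => x)); last first.
  move=> v vH; rewrite -scalerAl hx // scalerA homV //; exact: scale1r.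
by rewrite sumr_const -scaler_nat scalerA mulVf ?nH0 // scale1r.
Qed.

Lemma E_idem psi : hom psi -> E psi * E psi = E psi.
Proof. by move=> hp; apply: E_act => // v vH; rewrite E_emb. Qed.

Definition dist (psi psi' : gT -> F) := [exists w in H, psi w != psi' w].

Lemma E_orth psi psi' : hom psi -> hom psi' -> dist psi psi' -> E psi * E psi' = 0.
Proof.
move=> hp hp' /existsP [w /andP [wH ne]].
have e1 : emb w * (E psi * E psi') = psi w *: (E psi * E psi').
  by rewrite mulrA E_emb // scalerAl.
have e2 : emb w * (E psi * E psi') = psi' w *: (E psi * E psi').
  by rewrite mulrA embC -mulrA E_emb // scalerAr.
have : (psi w - psi' w) *: (E psi * E psi') = 0 by rewrite scalerBl -e1 -e2 subrr.
by move/eqP; rewrite scaler_eq0 subr_eq0 (negbTE ne) => /eqP.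
Qed.


Definition P (S : seq (gT -> F)) z := \sum_(psi <- S) psi z *: E psi.

Fixpoint good (S : seq (gT -> F)) : Prop :=
  if S is psi :: S' then hom psi /\ List.Forall (dist psi) S' /\ good S' else True.

Lemma P_cons psi S z : P (psi :: S) z = psi z *: E psi + P S z.
Proof. by rewrite /P big_cons. Qed.
Lemma P_nil z : P [::] z = 0.
Proof. by rewrite /P big_nil. Qed.

Lemma good_hom S psi : good S -> List.In psi S -> hom psi.
Proof.
elim: S => [|p S IH] //= [hp [_ gS]] [<-|iS] //; exact: IH.
Qed.

Lemma PE0 psi S z : hom psi -> List.Forall (dist psi) S -> good S -> E psi * P S z = 0.
Proof.
move=> hp; elim: S => [|p S IH]; first by rewrite P_nil mulr0.
move=> /List.Forall_cons_iff [d dS] [hq [_ gS]].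
by rewrite P_cons mulrDr IH // -scalerAr E_orth // scaler0 addr0.
Qed.

Lemma P_central S z a : P S z * a = a * P S z.
Proof.
rewrite /P mulr_suml mulr_sumr; apply: eq_bigr => p _.
by rewrite -scalerAl -scalerAr E_central.
Qed.

Lemma PE1 psi S z : good S -> List.In psi S -> E psi * P S z = psi z *: E psi.
Proof.
elim: S => [|p S IH] //= [hp [dS gS]] [<-|iS].
  by rewrite P_cons mulrDr PE0 // addr0 -scalerAr E_idem.
rewrite P_cons mulrDr IH // -scalerAr E_central E_orth ?scaler0 ?add0r //.
  exact: good_hom iS.
by move/List.Forall_forall: dS; apply.
Qed.

Lemma PM S z z' : good S -> P S z * P S z' = P S (z * z')%g.
Proof.
elim: S => [|p S IH]; first by rewrite !P_nil mul0r.
move=> [hp [dS gS]]; rewrite !P_cons mulrDl !mulrDr IH //.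
have e1 : (p z *: E p) * (p z' *: E p) = (p z * p z') *: E p.
  by rewrite -scalerAl -scalerAr E_idem // scalerA.
have e2 : (p z *: E p) * P S z' = 0.
  by rewrite -scalerAl PE0 // scaler0.
have e3 : P S z * (p z' *: E p) = 0.
  by rewrite -scalerAr P_central PE0 // scaler0.
by rewrite e1 e2 e3 addr0 add0r (proj2 hp).
Qed.

Lemma P_L S z : P S z \in L.
Proof. apply: Lsums => p; apply: LZ; exact: E_L. Qed.

Lemma P_H S w : good S -> w \in H -> P S w = emb w * P S 1.
Proof.
elim: S => [|p S IH]; first by rewrite !P_nil mulr0.
move=> [hp [dS gS]] wH; rewrite !P_cons mulrDr IH // (proj1 hp) scale1r.
by rewrite E_emb.
Qed.

Lemma exists_good (artA : artinian A)
  (absA : forall (V : lmodType F) (act : A -> V -> V),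
      simple_over predT act -> abs_simple_over predT act) :
  exists S, good S /\ P S 1%g = 1.
Proof.
pose Q (I : A -> Prop) := exists S, good S /\ forall x, I x <-> exists a, x = a * (1 - P S 1%g).
have Qid : forall I, Q I -> left_ideal I.
  move=> I [S [_ HI]]; split; first by apply/HI; exists 0; rewrite mul0r.
  split.
    move=> x y /HI [a ->] /HI [b ->]; apply/HI; exists (a + b); by rewrite mulrDl.
  move=> a x /HI [b ->]; apply/HI; exists (a * b); by rewrite mulrA.
have Q0 : exists I, Q I.
  by exists (fun x => exists a, x = a * (1 - P [::] 1%g)); exists [::]; split.
have [I [[S [gS HI]] Imin]] := MIN artA Qid Q0.
exists S; split => //; apply: NNPP => hne.
set f := 1 - P S 1%g.
have fne : f <> 0 by move=> /eqP; rewrite subr_eq0 => /eqP h; apply: hne.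
have fC : forall a, f * a = a * f by move=> a; rewrite /f mulrBl mulrBr mul1r mulr1 P_central.
have fI : f * f = f.
  by rewrite /f mulrBl mul1r mulrBr mulr1 PM // mulg1 subrr subr0.
pose QK (J : A -> Prop) := left_ideal J /\ (forall x, J x -> exists a, x = a * f) /\
   exists x, J x /\ x <> 0.
have QK0 : exists J, QK J.
  exists (fun x => exists a, x = a * f); split.
    split; first by exists 0; rewrite mul0r.
    split.
      move=> x y [a ->] [b ->]; exists (a + b); by rewrite mulrDl.
    move=> a x [b ->]; exists (a * b); by rewrite mulrA.
  split => //; exists f; split => //; exists 1; by rewrite mul1r.
have [K [[HK [Kf Knz]] Kmin]] := MIN artA (fun J h => proj1 h) QK0.
have Kmin' : forall J, left_ideal J -> (forall x, J x -> K x) ->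
    (exists x, J x /\ x <> 0) -> forall x, K x -> J x.
  move=> J hJ JK nz; apply: Kmin => //; split => //; split => // x Jx; exact: Kf _ (JK _ Jx).
have fK : forall k, K k -> f * k = k.
  by move=> k /Kf [a ->]; rewrite mulrA (fC a) -mulrA fI.
have sch := schur_central absA HK Knz Kmin'.
have psiP : forall z, {s : F | forall k, K k -> emb z * k = s *: k}.
  move=> z; apply: constructive_indefinite_description; apply: sch; exact: embC.
pose psiK z := sval (psiP z).
have psiKP : forall z k, K k -> emb z * k = psiK z *: k := fun z => svalP (psiP z).
have [k0 [Kk0 nk0]] := Knz.
have canc : forall s t : F, s *: k0 = t *: k0 -> s = t.
  move=> s t /eqP; rewrite -subr_eq0 -scalerBl scaler_eq0 subr_eq0.
  by case/orP => /eqP // h; case: nk0.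
have hK : hom psiK.
  split.
    by apply: canc; rewrite -psiKP // emb1 mul1r scale1r.
  move=> x y; apply: canc; rewrite -psiKP // embM -mulrA (psiKP y k0 Kk0) -scalerAr psiKP //.
  by rewrite scalerA mulrC.
have EK : E psiK * k0 = k0 by apply: E_act => // v _; exact: psiKP.
have dS : List.Forall (dist psiK) S.
  apply/List.Forall_forall => p' iS; apply: NNPP => /negP nd.
  move: nd; rewrite negb_exists => /forallP nd.
  have hp' := good_hom gS iS.
  have E'k : E p' * k0 = k0.
    apply: E_act => // v vH; rewrite psiKP //.
    by have := nd v; rewrite vH /= negbK => /eqP ->.
  have E'f : E p' * f = 0.
    by rewrite /f mulrBr mulr1 PE1 // (proj1 hp') scale1r subrr.
  by apply: nk0; rewrite -E'k -(fK k0 Kk0) mulrA E'f mul0r.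
have gS' : good (psiK :: S) by split.
have f'E : 1 - P (psiK :: S) 1%g = (1 - E psiK) * f.
  rewrite P_cons (proj1 hK) scale1r mulrBl mul1r.
  by rewrite /f mulrBr mulr1 (PE0 _ hK dS gS) subr0 opprD addrA addrAC.
have Ef : E psiK * f = E psiK.
  by rewrite /f mulrBr mulr1 (PE0 _ hK dS gS) subr0.
pose I' x := exists a, x = a * (1 - P (psiK :: S) 1%g).
have QI' : Q I' by exists (psiK :: S); split.
have sub : forall x, I' x -> I x.
  by move=> x [a ->]; apply/HI; exists (a * (1 - E psiK)); rewrite f'E mulrA.
have If : I f by apply/HI; exists 1; rewrite mul1r.
have [a fa] := Imin I' QI' sub f If.
have Ef' : E psiK * (1 - P (psiK :: S) 1%g) = 0.
  by rewrite f'E mulrA (mulrBr (E psiK) 1 (E psiK)) mulr1 E_idem // subrr mul0r.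
have E0 : E psiK = 0.
  by rewrite -Ef fa mulrA E_central -mulrA Ef' mulr0.
by apply: nk0; rewrite -EK E0 mul0r.
Qed.


End Chars.

Lemma sum_partition (R : pzRingType) (I J : finType) (p : I -> J) (g : I -> R) (h : J -> R) :
  \sum_(j : J) (\sum_(i | p i == j) g i) * h j = \sum_(i : I) g i * h (p i).
Proof.
under eq_bigr do rewrite mulr_suml.
rewrite [RHS](partition_big p predT) //=; apply: eq_bigr => j _.
by apply: eq_bigr => i /eqP ->.
Qed.


Unset Implicit Arguments.
Set Strict Implicit.
Set Printing Implicit Defensive.

Theorem corollary5p3
  (F : fieldType) (A : algType F) (L : {pred A})
  (gT : finGroupType) (emb : gT -> A)
  (sigma : coset_of [set z : gT | emb z \in L] -> gT) :
  (* Lambda' = A is Artinian; Lambda = L is a subalgebra *)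
  artinian A -> is_subalg L ->
  (* all simple Lambda'- and Lambda-modules are absolutely simple *)
  (forall (V : lmodType F) (act : A -> V -> V),
      simple_over predT act -> abs_simple_over predT act) ->
  (forall (V : lmodType F) (act : A -> V -> V),
      simple_over L act -> abs_simple_over L act) ->
  (* Z = emb(gT): a finite subgroup of the units of the centre of A *)
  injective emb -> emb 1%g = 1 -> {morph emb : x y / (x * y)%g >-> x * y} ->
  (forall z a, emb z * a = a * emb z) ->
  (* |Z| prime to the characteristic of F *)
  (#|gT|%:R : F) != 0 ->
  (* sigma : Y = Z/(Lambda cap Z) -> Z is a section with sigma 1 = 1 *)
  (forall y, coset [set z : gT | emb z \in L] (sigma y) = y) ->
  sigma 1%g = 1%g ->
  (* A is free as a left Lambda-module with basis (emb (sigma y))_y *)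
  (forall a : A, exists c : coset_of [set z : gT | emb z \in L] -> A,
      (forall y, c y \in L) /\ a = \sum_y c y * emb (sigma y)) ->
  (forall c c' : coset_of [set z : gT | emb z \in L] -> A,
      (forall y, c y \in L) -> (forall y, c' y \in L) ->
      \sum_y c y * emb (sigma y) = \sum_y c' y * emb (sigma y) ->
      forall y, c y = c' y) ->
  (* ... and as a right Lambda-module *)
  (forall a : A, exists c : coset_of [set z : gT | emb z \in L] -> A,
      (forall y, c y \in L) /\ a = \sum_y emb (sigma y) * c y) ->
  (forall c c' : coset_of [set z : gT | emb z \in L] -> A,
      (forall y, c y \in L) -> (forall y, c' y \in L) ->
      \sum_y emb (sigma y) * c y = \sum_y emb (sigma y) * c' y ->
      forall y, c y = c' y) ->
  (* y~ Lambda = Lambda y~ *)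
  (forall y l, l \in L -> exists l', l' \in L /\ emb (sigma y) * l = l' * emb (sigma y)) ->
  (forall y l, l \in L -> exists l', l' \in L /\ l * emb (sigma y) = emb (sigma y) * l') ->
  (* y1~ y2~ Lambda = (y1 y2)~ Lambda *)
  (forall y1 y2 l, l \in L -> exists l', l' \in L /\
      emb (sigma y1) * emb (sigma y2) * l = emb (sigma (y1 * y2)%g) * l') ->
  (forall y1 y2 l, l \in L -> exists l', l' \in L /\
      emb (sigma (y1 * y2)%g) * l = emb (sigma y1) * emb (sigma y2) * l') ->
  (* conclusion: every Lambda-module extends to a Lambda'-module *)
  forall (V : lmodType F) (act : A -> V -> V),
    module_over L act ->
    exists act' : A -> V -> V,
      module_over predT act' /\ forall x, x \in L -> forall u, act' x u = act x u.
Proof.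
move=> artA subL absA _ Hinj emb1 embM embC Hn sigc sig1 free_ex free_uniq _ _ _ _ _ _ V act actL.
have [S [gS PS1]] := exists_good subL emb1 embM embC Hn artA absA.
pose phi z := P L emb S z.
have phiL : forall z, phi z \in L := P_L emb subL S.
have phiM : forall z z', phi z * phi z' = phi (z * z')%g := fun z z' => PM subL emb1 embM embC Hn z z' gS.
have phiC : forall z a, phi z * a = a * phi z := P_central L embC S.
have phiH : forall w, w \in [set z : gT | emb z \in L] -> phi w = emb w.
  by move=> w wH; rewrite /phi (P_H subL emb1 embM gS wH) PS1 mulr1.
pose H := [set z : gT | emb z \in L].
pose HG := Hg subL emb1 embM.
have abT : abelian [set: gT].
  by apply/centsP => x _ y _; exact: (gC embM embC Hinj).
have memN : forall x, x \in 'N(HG)%g.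
  by move=> x; have := sub_abelian_norm abT (subsetT HG); move/subsetP; apply; rewrite inE.
have cosetE : forall z, (z * (sigma (coset H z))^-1)%g \in H.
  move=> z; have := sigc (coset H z); move/esym.
  by move/(rcoset_kercosetP (memN _) (memN _)); rewrite mem_rcoset.
pose coordP a := constructive_indefinite_description _ (free_ex a).
pose coord a := sval (coordP a).
have coordL : forall a y, coord a y \in L := fun a => proj1 (svalP (coordP a)).
have coordE : forall a, a = \sum_y coord a y * emb (sigma y) := fun a => proj2 (svalP (coordP a)).
pose theta a := \sum_y coord a y * phi (sigma y).
have T2 : forall (I : finType) (l : I -> A) (z : I -> gT), (forall i, l i \in L) ->
    theta (\sum_i l i * emb (z i)) = \sum_i l i * phi (z i).
  move=> I l z lL.
  pose y i := coset H (z i).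
  pose w i := (z i * (sigma (y i))^-1)%g.
  have zi : forall i, z i = (w i * sigma (y i))%g by move=> i; rewrite /w mulgVK.
  have wH : forall i, emb (w i) \in L by move=> i; have := cosetE (z i); rewrite inE.
  pose c' yy := \sum_(i | y i == yy) l i * emb (w i).
  have c'L : forall yy, c' yy \in L.
    by move=> yy; apply: Lsum => // i _; apply: LM.
  set a := \sum_i l i * emb (z i).
  have ae : a = \sum_yy c' yy * emb (sigma yy).
    rewrite /c' sum_partition; apply: eq_bigr => i _.
    by rewrite -mulrA -embM -zi.
  have co : forall yy, coord a yy = c' yy.
    by apply: free_uniq => //; rewrite -coordE.
  rewrite /theta (eq_bigr (fun yy => c' yy * phi (sigma yy))); last first.
    by move=> yy _; rewrite co.
  rewrite /c' sum_partition; apply: eq_bigr => i _.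
  by rewrite -mulrA -phiH ?inE // phiM -zi.
have thL : forall a, theta a \in L.
  by move=> a; apply: Lsum => // y _; apply: LM.
have th_id : forall l, l \in L -> theta l = l.
  move=> l lL; have := T2 _ (fun _ : 'I_1 => l) (fun _ => 1%g) (fun _ => lL).
  rewrite !big_ord1 emb1 mulr1 => ->.
  by rewrite phiH ?inE ?emb1 ?mulr1 //; exact: (L1 subL).
have th_lin : forall k a b, theta (k *: a + b) = k *: theta a + theta b.
  move=> k a b.
  have e : k *: a + b = \sum_y (k *: coord a y + coord b y) * emb (sigma y).
    rewrite {1}(coordE a) {1}(coordE b) scaler_sumr -big_split; apply: eq_bigr => y _.
    by rewrite mulrDl scalerAl.
  rewrite e T2; last by move=> y; apply: LZD.
  rewrite /theta scaler_sumr -big_split; apply: eq_bigr => y _.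
  by rewrite mulrDl scalerAl.
have th_mul : forall a b, theta (a * b) = theta a * theta b.
  move=> a b.
  have e : a * b = \sum_(p : _ * _) (coord a p.1 * coord b p.2) *
      emb (sigma p.1 * sigma p.2)%g.
    rewrite {1}(coordE a) {1}(coordE b) mulr_suml.
    under eq_bigr do rewrite mulr_sumr.
    rewrite pair_big /=; apply: eq_bigr => p _.
    rewrite embM !mulrA -(mulrA (coord a p.1)) (embC _ (coord b p.2)) !mulrA.
    by [].
  rewrite e T2; last by move=> p; apply: LM.
  apply: esym; rewrite /theta mulr_suml.
  under eq_bigr do rewrite mulr_sumr.
  rewrite pair_big /=; apply: eq_bigr => p _.
  rewrite -phiM !mulrA -(mulrA (coord a p.1)) (phiC _ (coord b p.2)) !mulrA.
  by [].
exists (fun a u => act (theta a) u); split.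
  case: actL => [lin [Zlin [one mul]]].
  split; first by move=> x _; exact: lin.
  split; first by move=> x y _ _ k u; rewrite th_lin Zlin.
  split; first by move=> u; rewrite th_id ?one //; exact: (L1 subL).
  by move=> x y _ _ u; rewrite th_mul mul.
by move=> x xL u; rewrite th_id.
Qed.
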